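(* Let $n,m$ be positive integers and let $\mathbb P$ be one of the distributions $x_m,x^*_m,x^+_m$ on $S_n$. Then $\mathrm{sep}(\mathbb P)=\max\{1-n!\,\mathbb P(0),\,1-n!\,\mathbb P(k_{\max})\}$ and $\|\mathbb P-U\|_\infty=\max\{|1-n!\,\mathbb P(0)|,\,|1-n!\,\mathbb P(k_{\max})|\}$, where $k_{\max}=\lfloor n/2\rfloor$, $\lfloor (n-1)/2\rfloor$, $n-1$ for $x_m$, $x^*_m$, $x^+_m$ respectively.
   Context: For $\pi\in S_n$: $\mathrm{des}(\pi)=|\{i:\pi(i)>\pi(i+1)\}|$; $\mathrm{pk}(\pi)=|\{2\le i\le n-1:\pi(i-1)<\pi(i)>\pi(i+1)\}|$; $\mathrm{lpk}(\pi)$ is the number of peaks with the convention $\pi(0)=0$. Integers are written with $\bar i=-i$, ordered $0<_{\mathbb Z}\bar1<_{\mathbb Z}1<_{\mathbb Z}\bar2<2<\cdots$, $|\bar j|=j$; $a\prec_+b$ means $a<_{\mathbb Z}b$ or $a=b\in\{0,1,\ldots\}$; $a\prec_-b$ means $a<_{\mathbb Z}b$ or $a=b\in\{\bar1,\bar2,\ldots\}$. A $\pi$-partition is $f:[n]\to\mathbb Z$ with, for $1\le i<n$, $f(\pi(i))\prec_+f(\pi(i+1))$ if $\pi(i)<\pi(i+1)$, $f(\pi(i))\prec_-f(\pi(i+1))$ if $\pi(i)>\pi(i+1)$. $\Omega_\pi(m)$ counts $\pi$-partitions with $|f(i)|\le m$; $\Omega^*_\pi(m)$ those also never $0$; $\Omega^+_\pi(m)$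 those with values in $\{1,\ldots,m\}$. The distributions are $x_m(\pi)=\Omega_\pi(m)/(2m+1)^n$, $x^*_m(\pi)=\Omega^*_\pi(m)/(2m)^n$, $x^+_m(\pi)=\Omega^+_\pi(m)/m^n$ (the lazy, standard and strict $m$-shelf shuffling distributions). It is known that $x_m(\pi)$ depends only on $\mathrm{lpk}(\pi)$, $x^*_m(\pi)$ only on $\mathrm{pk}(\pi)$, $x^+_m(\pi)$ only on $\mathrm{des}(\pi)$; for $\mathbb P=x_m$ (resp. $x^*_m$, $x^+_m$), $\mathbb P(k)$ denotes the common value on permutations with $\mathrm{lpk}=k$ (resp. $\mathrm{pk}=k$, $\mathrm{des}=k$). $U$ is the uniform distribution on $S_n$; $\mathrm{sep}(\mathbb P)=\max_{\pi}(1-n!\mathbb P(\pi))$ and $\|\mathbb P-U\|_\infty=\max_\pi|1-n!\mathbb P(\pi)|$. *)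

(* Defs.v *)
From HB Require Import structures.
From mathcomp Require Import all_boot all_order all_algebra all_fingroup.
Set Implicit Arguments. Unset Strict Implicit. Unset Printing Implicit Defensive.
Import Order.TTheory GRing.Theory Num.Theory.

(* Permutations pi in S_n are s : 'S_n (acting on {0..n-1}); we use the
   1-indexed view pv s i = s(i-1)+1 for 1 <= i <= n, and pv s 0 = 0
   (the convention pi(0) = 0 used for left peaks). *)
Definition pv (n : nat) (s : 'S_n) (i : nat) : nat :=
  if i is i'.+1 then (if insub i' is Some j then (s j).+1 else 0) else 0.

Definition des (n : nat) (s : 'S_n) : nat :=
  count (fun i => pv s (i.+1) < pv s i) (iota 1 n.-1).

Definition pk (n : nat) (s : 'S_n) : nat :=
  count (fun i => (pv s i.-1 < pv s i) && (pv s i.+1 < pv s i)) (iota 2 (n - 2)).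

Definition lpk (n : nat) (s : 'S_n) : nat :=
  count (fun i => (pv s i.-1 < pv s i) && (pv s i.+1 < pv s i)) (iota 1 n.-1).

(* The total order 0 < -1 < 1 < -2 < 2 < ... on Z, via a rank into nat. *)
Definition zrank (z : int) : nat :=
  if (0 <= z)%R then (absz z).*2 else (absz z).*2.-1.

Definition zlt (a b : int) : bool := zrank a < zrank b.

Definition prec_plus (a b : int) : bool := zlt a b || ((a == b) && (0 <= a)%R).
Definition prec_minus (a b : int) : bool := zlt a b || ((a == b) && (a < 0)%R).

(* f : [n] -> Z is a pi-partition (positions and values shifted to 0-indexing). *)
Definition is_ppart (n : nat) (s : 'S_n) (f : 'I_n -> int) : bool :=
  [forall i : 'I_n, forall j : 'I_n, (j == i.+1 :> nat) ==>
    (if (s i : nat) < s j then prec_plus (f (s i)) (f (s j))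
     else prec_minus (f (s i)) (f (s j)))].

Definition dec (m : nat) (k : 'I_(2 * m + 1)) : int := (k : nat)%:Z - m%:Z.

(* number of pi-partitions f with |f(i)| <= m and every value satisfying Q *)
Definition Omega_gen (Q : int -> bool) (n : nat) (s : 'S_n) (m : nat) : nat :=
  #|[set f : {ffun 'I_n -> 'I_(2 * m + 1)} |
      is_ppart s (fun i => dec (f i)) && [forall i, Q (dec (f i))]]|.

Definition Omega := Omega_gen (fun _ => true).
Definition Omega_star := Omega_gen (fun z => z != 0).
Definition Omega_plus := Omega_gen (fun z => (0 < z)%R).

Inductive shelf := Lazy | Standard | Strict.

Local Open Scope ring_scope.

Definition shuffle_dist (k : shelf) (m n : nat) (s : 'S_n) : rat :=
  match k with
  | Lazy => (Omega s m)%:R / ((2 * m + 1) ^ n)%:R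
  | Standard => (Omega_star s m)%:R / ((2 * m) ^ n)%:R
  | Strict => (Omega_plus s m)%:R / (m ^ n)%:R
  end.

Definition shelf_stat (k : shelf) (n : nat) (s : 'S_n) : nat :=
  match k with Lazy => lpk s | Standard => pk s | Strict => des s end.

Definition kmax (k : shelf) (n : nat) : nat :=
  match k with Lazy => n./2 | Standard => n.-1./2 | Strict => n.-1 end.

(* The max over the nonempty finite set 'S_n is written as a big Num.max
   seeded with the value at the identity permutation (which is in the range). *)
Definition sep (n : nat) (P : 'S_n -> rat) : rat :=
  \big[Num.max/(1 - (n`!)%:R * P 1%g)]_(s : 'S_n) (1 - (n`!)%:R * P s).

Definition dist_inf (n : nat) (P : 'S_n -> rat) : rat :=
  \big[Num.max/`|1 - (n`!)%:R * P 1%g|]_(s : 'S_n) `|1 - (n`!)%:R * P s|.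

(* Main.v *)
Require Import Defs.
From mathcomp Require Import all_boot all_order all_algebra all_fingroup.
From mathcomp Require Import zify.
Import Order.TTheory GRing.Theory Num.Theory.
Set Implicit Arguments. Unset Strict Implicit. Unset Printing Implicit Defensive.

Definition sgn (b : bool) (A : nat) : int := (if b then (- (A%:Z)) else A%:Z)%R.

Lemma zrank_pos A : zrank (A%:Z)%R = A.*2.
Proof. by rewrite /zrank lez_nat leq0n. Qed.

Lemma zrank_neg A : 0 < A -> zrank (- (A%:Z))%R = A.*2.-1.
Proof.
move=> A0; rewrite /zrank oppr_ge0 lez_nat leqn0 eqn0Ngt A0 /=.
by rewrite abszN absz_nat.
Qed.

Lemma step_sgn (T b b' : bool) (A A' : nat) : A <= A' -> (b -> 0 < A) -> (b' -> 0 < A') ->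
 (if T then prec_plus (sgn b A) (sgn b' A') else prec_minus (sgn b A) (sgn b' A'))
   = (A < A') || (if T then ~~ b' else b).
Proof.
move=> le bA bA'; rewrite /prec_plus /prec_minus /zlt /sgn.
case: b bA => bA; case: b' bA' => bA'; case: T;
  rewrite ?zrank_neg ?zrank_pos ?bA ?bA' // ?eqr_opp ?eqz_nat ?oppr_ge0 ?lez_nat ?oppr_lt0 ?ltz_nat;
  try (have := bA isT); try (have := bA' isT); move: le; lia.
Qed.

Definition Tst n (s : 'S_n) (j : nat) : bool := pv s j < pv s j.+1.

Definition validz n (s : 'S_n) (z : 'I_n -> int) : bool :=
  [forall i : 'I_n, forall j : 'I_n, (j == i.+1 :> nat) ==>
    (if Tst s j then prec_plus (z i) (z j) else prec_minus (z i) (z j))].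

Lemma pv_ord n (s : 'S_n) (i : 'I_n) : pv s i.+1 = (s i).+1.
Proof. by rewrite /pv valK. Qed.

Lemma Tst_ord n (s : 'S_n) (i j : 'I_n) : (j : nat) = i.+1 -> Tst s j = (s i < s j).
Proof. by move=> e; rewrite /Tst {1}e !pv_ord. Qed.

Lemma is_ppart_reindex n (s : 'S_n) (f : 'I_n -> int) :
  is_ppart s f = validz s (fun i => f (s i)).
Proof.
rewrite /is_ppart /validz; apply: eq_forallb => i; apply: eq_forallb => j.
case: eqP => //= e; by rewrite (Tst_ord s e).
Qed.

Lemma validz_ext n (s : 'S_n) z1 z2 : z1 =1 z2 -> validz s z1 = validz s z2.
Proof. by move=> e; rewrite /validz; apply: eq_forallb => i; apply: eq_forallb => j; rewrite !e. Qed.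

Definition hset Q n (s : 'S_n) m :=
  [set h : {ffun 'I_n -> 'I_(2 * m + 1)} |
     validz s (fun i => dec (h i)) && [forall i, Q (dec (h i))]].

Lemma Omega_reindex Q n (s : 'S_n) m : Omega_gen Q s m = #|hset Q s m|.
Proof.
rewrite /Omega_gen /hset.
pose g (f : {ffun 'I_n -> 'I_(2 * m + 1)}) := [ffun i => f ((s^-1)%g i)].
have ginj : injective g.
  move=> f1 f2 /ffunP e; apply/ffunP => x.
  have := e (s x); by rewrite !ffunE permK.
rewrite -(card_preimset _ ginj); apply: eq_card => f.
rewrite !inE is_ppart_reindex.
rewrite [X in X && _ = _](validz_ext _ (z2 := fun i => dec (f i))); last by move=> i; rewrite ffunE permK.
congr andb.
apply/forallP/forallP => H x; last by rewrite ffunE.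
by have := H (s x); rewrite ffunE permK.
Qed.

Section Bij.
Variables (n m : nat).
Notation Dt := {ffun 'I_n -> 'I_m.+1}.
Notation St := {ffun 'I_n -> bool}.

Definition Dn (d : Dt) (k : nat) : nat := oapp (fun o : 'I_n => val (d o)) 0 (insub k).
Lemma Dn_ord d (i : 'I_n) : Dn d i = d i.
Proof. by rewrite /Dn valK. Qed.
Lemma Dn_ge d k : n <= k -> Dn d k = 0.
Proof. by move=> h; rewrite /Dn insubF // ltnNge h. Qed.

Definition Ad (d : Dt) (j : nat) := \sum_(i < j.+1) Dn d i.
Lemma AdS d j : Ad d j.+1 = Ad d j + Dn d j.+1.
Proof. by rewrite /Ad big_ord_recr. Qed.
Lemma Ad0 d : Ad d 0 = Dn d 0.
Proof. by rewrite /Ad big_ord_recr big_ord0. Qed.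

Lemma Ad_mono d i j : i <= j -> Ad d i <= Ad d j.
Proof. elim: j => [|j IH]; first by rewrite leqn0 => /eqP ->.
rewrite leq_eqVlt => /orP [/eqP -> //|]; rewrite ltnS => /IH h.
by rewrite AdS; apply: (leq_trans h); apply: leq_addr. Qed.

Lemma Ad_const d j : n <= j -> Ad d j = Ad d n.-1.
Proof.
elim: j => [|j IH] h.
  by have -> : n.-1 = 0 by lia.
rewrite leq_eqVlt in h; case/orP: h => [/eqP eq|lt].
  by rewrite eq /= AdS Dn_ge ?addn0 // eq.
rewrite ltnS in lt; rewrite AdS Dn_ge ?addn0 ?IH //; exact: leqW.
Qed.

Lemma sum_Dn d : \sum_(i < n) Dn d i = Ad d n.-1.
Proof.
rewrite -(Ad_const d (leqnn n)) /Ad big_ord_recr /= Dn_ge // addn0.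
by apply: eq_bigr => i _.
Qed.

Definition zv (p : Dt * St) (j : 'I_n) : int := sgn (p.2 j) (Ad p.1 j).
Definition domp (p : Dt * St) := (\sum_(i < n) Dn p.1 i <= m) && [forall j, p.2 j ==> (0 < Ad p.1 j)].
Lemma pos2m : 0 < 2 * m + 1. Proof. by rewrite addn1. Qed.
Definition mkv (x : nat) : 'I_(2 * m + 1) := insubd (Ordinal pos2m) x.
Lemma mkvK x : x < 2 * m + 1 -> val (mkv x) = x.
Proof. by move=> h; rewrite val_insubd h. Qed.

Definition build (p : Dt * St) : {ffun 'I_n -> 'I_(2 * m + 1)} :=
  [ffun j => mkv (if p.2 j then m - Ad p.1 j else m + Ad p.1 j)].

Lemma Ad_le_m p (j : nat) : domp p -> Ad p.1 j <= m.
Proof.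
case/andP; rewrite sum_Dn => h _.
case: (leqP n j) => hj; first by rewrite Ad_const.
by apply: leq_trans h; apply: Ad_mono; lia.
Qed.

Lemma dec_build p (j : 'I_n) : domp p -> dec (build p j) = zv p j.
Proof.
move=> dp; have hA := Ad_le_m j dp.
rewrite /dec /zv /sgn ffunE mkvK; last by case: (p.2 j); lia.
by case: (p.2 j); lia.
Qed.

Definition U (h : {ffun 'I_n -> 'I_(2 * m + 1)}) (k : nat) : nat :=
  oapp (fun o : 'I_n => absz (dec (h o))) 0 (insub k).
Definition prevU h (j : nat) := if j is j'.+1 then U h j' else 0.
Definition decomp h : Dt * St :=
  ([ffun j : 'I_n => inord (U h j - prevU h j)], [ffun j => (dec (h j) < 0)%R]).

Lemma U_ord h (i : 'I_n) : U h i = absz (dec (h i)).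
Proof. by rewrite /U valK. Qed.

Lemma U_le h k : U h k <= m.
Proof.
rewrite /U; case: insubP => //= o _ _.
rewrite /dec; have := ltn_ord (h o); lia.
Qed.

Lemma U_build p k : domp p -> k < n -> U (build p) k = Ad p.1 k.
Proof.
move=> dp kn; rewrite /U insubT /= dec_build // /zv /sgn.
by case: (p.2 _); rewrite ?abszN absz_nat.
Qed.

Lemma decomp_build p : domp p -> decomp (build p) = p.
Proof.
move=> dp; case: p dp => d sg dp.
rewrite /decomp; congr pair; apply/ffunP => j; rewrite ffunE.
  apply: val_inj => /=; rewrite inordK.
    rewrite U_build //; case: j => [[|j] jn] /=.
      by rewrite Ad0 subn0 -(Dn_ord d (Ordinal jn)).
    rewrite (U_build dp) ?AdS; last by lia.
    by rewrite addKn -(Dn_ord d (Ordinal jn)).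
  by have := U_le (build (d,sg)) j; lia.
rewrite dec_build // /zv /sgn /=.
case/andP: (dp) => _ /forallP /(_ j) /=.
case: (sg j) => //= h; apply/idP; move: h; lia.
Qed.

Lemma build_inj : {in [pred p | domp p] &, injective build}.
Proof. by move=> p q dp dq e; rewrite -(decomp_build dp) -(decomp_build dq) e. Qed.

Lemma prec_rank a b : prec_plus a b || prec_minus a b -> zrank a <= zrank b.
Proof.
rewrite /prec_plus /prec_minus /zlt.
by case/orP => /orP [/ltnW //|/andP [/eqP -> _]].
Qed.

Lemma rank_abs a b : zrank a <= zrank b -> absz a <= absz b.
Proof. rewrite /zrank; case: ifP; case: ifP; lia. Qed.

Variable (Q : int -> bool) (s : 'S_n).

Lemma U_step (h : {ffun 'I_n -> 'I_(2 * m + 1)}) (i j : 'I_n) : validz s (fun k => dec (h k)) -> (j : nat) = i.+1 ->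
  U h i <= U h j.
Proof.
move=> /forallP /(_ i) /forallP /(_ j) /implyP H e.
rewrite !U_ord; apply: rank_abs; apply: prec_rank.
move: (H (introT eqP e)); case: (Tst s j) => ->; by rewrite ?orbT.
Qed.

Lemma U_mono (h : {ffun 'I_n -> 'I_(2 * m + 1)}) k : validz s (fun k => dec (h k)) -> k.+1 < n -> U h k <= U h k.+1.
Proof.
move=> v kn; have kn' : k < n by lia.
exact: (@U_step h (Ordinal kn') (Ordinal kn) v).
Qed.

Lemma Dn_decomp (h : {ffun 'I_n -> 'I_(2 * m + 1)}) k : k < n -> Dn (decomp h).1 k = U h k - prevU h k.
Proof.
move=> kn; rewrite /Dn insubT /= ffunE inordK //.
by have := U_le h (Sub k kn : 'I_n); lia.
Qed.

Lemma Ad_decomp (h : {ffun 'I_n -> 'I_(2 * m + 1)}) j : validz s (fun k => dec (h k)) -> j < n -> Ad (decomp h).1 j = U h j.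
Proof.
move=> v; elim: j => [|j IH] jn; first by rewrite Ad0 Dn_decomp // subn0.
rewrite AdS IH; last by lia.
rewrite Dn_decomp //=; have := U_mono v jn; lia.
Qed.

Lemma build_decomp h : h \in hset Q s m -> domp (decomp h) /\ build (decomp h) = h.
Proof.
rewrite inE => /andP [v _].
have dd : domp (decomp h).
  apply/andP; split.
    rewrite sum_Dn; case: (posnP n) => [n0|np].
      have -> : n.-1 = 0 by rewrite n0.
      by rewrite Ad0 Dn_ge // n0.
    by rewrite Ad_decomp ?U_le //; lia.
  apply/forallP => j; rewrite /= ffunE Ad_decomp // U_ord; apply/implyP; lia.
split => //; apply/ffunP => j; apply: val_inj.
have hA : Ad (decomp h).1 j = absz (dec (h j)) by rewrite Ad_decomp // U_ord.
rewrite ffunE /= ffunE hA mkvK.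
  rewrite /dec; have := ltn_ord (h j); move: (nat_of_ord (h j)) => k; case: ifP; lia.
rewrite /dec; have := ltn_ord (h j); move: (nat_of_ord (h j)) => k; case: ifP; lia.
Qed.

Lemma card_hset : #|hset Q s m| =
  \sum_(p : Dt * St) (domp p && validz s (zv p) && [forall j, Q (zv p j)]).
Proof.
have -> : hset Q s m = build @: [set p | domp p && (build p \in hset Q s m)].
  apply/setP => h; apply/idP/imsetP => [hh|[p]].
    case: (build_decomp hh) => dd e; exists (decomp h) => //.
    by rewrite inE dd e hh.
  by rewrite inE => /andP [_ ?] ->.
rewrite card_in_imset; last first.
  by move=> p q; rewrite !inE => /andP [dp _] /andP [dq _]; apply: build_inj.
rewrite -sum1_card big_mkcond /=; apply: eq_bigr => p _.
rewrite inE; case dp: (domp p) => //=.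
rewrite inE (validz_ext _ (z2 := zv p)); last by move=> j; rewrite dec_build.
rewrite (eq_forallb (P2 := fun j => Q (zv p j))); last by move=> j; rewrite dec_build.
by case: (_ && _).
Qed.

End Bij.

Lemma prod_bool (I : finType) (P : pred I) : \prod_(i : I) (P i : nat) = [forall i, P i].
Proof.
case: (boolP [forall i, P i]) => [/forallP H|/forallP H].
  by rewrite big1 // => i _; rewrite H.
have [i Hi] : exists i, ~~ P i.
  by apply/existsP; move: H; rewrite -negb_forall => /forallP.
by rewrite (bigD1 i) //= (negbTE Hi).
Qed.

Section Local.
Variables (n m : nat) (Q : int -> bool) (s : 'S_n).
Notation Dt := {ffun 'I_n -> 'I_m.+1}.
Notation St := {ffun 'I_n -> bool}.

Definition X (d : Dt) (j : nat) (b : bool) : bool :=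
  [&& (b ==> (0 < Ad d j)), Q (sgn b (Ad d j)),
      (Tst s j && (Dn d j == 0)) ==> ~~ b &
      ((j.+1 < n) && ~~ Tst s j.+1 && (Dn d j.+1 == 0)) ==> b].

Lemma key (d : Dt) (sg : St) : \sum_(i < n) Dn d i <= m ->
  (domp (d, sg) && validz s (zv (d, sg)) && [forall j, Q (zv (d, sg) j)])
  = [forall j : 'I_n, X d j (sg j)].
Proof.
move=> hm.
have stepE : forall i j : 'I_n, (j : nat) = i.+1 ->
   (forall k : 'I_n, sg k ==> (0 < Ad d k)) ->
   (if Tst s j then prec_plus (zv (d, sg) i) (zv (d, sg) j)
    else prec_minus (zv (d, sg) i) (zv (d, sg) j))
   = (0 < Dn d j) || (if Tst s j then ~~ sg j else sg i).
  move=> i j e H; rewrite /zv /= step_sgn; first last.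
  - exact/implyP/H.
  - exact/implyP/H.
  - by apply: Ad_mono; rewrite e.
  by rewrite e AdS -e; congr orb; lia.
apply/idP/forallP.
  case/andP => /andP [/andP [_ /forallP dA] /forallP V] /forallP HQ j.
  rewrite /X (dA j) /= (HQ j) /=; apply/andP; split.
    apply/implyP => /andP [Tj /eqP Dj].
    case: j Tj Dj => [[|i] jn] /= Tj Dj.
      apply/negP => sj; move: (dA (Ordinal jn)); rewrite /= sj Ad0 Dj //.
    have ilt : i < n by lia.
    have := V (Ordinal ilt); move/forallP/(_ (Ordinal jn))/implyP/(_ (eqxx _)).
    rewrite stepE //= ?Tj ?Dj //; exact: dA.
  apply/implyP => /andP [/andP [jn Tj] /eqP Dj].
  have := V j; move/forallP/(_ (Ordinal jn))/implyP/(_ (eqxx _)).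
  rewrite stepE //= ?(negbTE Tj) ?Dj //; exact: dA.
move=> HX.
have dA : forall k : 'I_n, sg k ==> (0 < Ad d k).
  by move=> k; case/and4P: (HX k).
apply/andP; split; first (apply/andP; split).
- by rewrite /domp hm; apply/forallP.
- apply/forallP => i; apply/forallP => j; apply/implyP => /eqP e.
  rewrite stepE //; case: (posnP (Dn d j)) => [Dj|Dj] //=; rewrite ?Dj /=.
  case Tj: (Tst s j).
    case/and4P: (HX j) => _ _ /implyP H _; apply: H; by rewrite Tj Dj.
  case/and4P: (HX i) => _ _ _ /implyP H; apply: H.
  by rewrite -e ltn_ord Tj -Dj /= eqxx.
- apply/forallP => j; by case/and4P: (HX j).
Qed.

Lemma sum_sigma (d : Dt) :
  \sum_(sg : St) (domp (d, sg) && validz s (zv (d, sg)) && [forall j, Q (zv (d, sg) j)])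
  = (\sum_(i < n) Dn d i <= m) * \prod_(j < n) (X d j false + X d j true).
Proof.
case: (boolP (\sum_(i < n) Dn d i <= m)) => hm; last first.
  by rewrite mul0n big1 // => sg _; rewrite /domp /= (negbTE hm).
rewrite mul1n (eq_bigr (fun sg : St => \prod_(j < n) (X d j (sg j) : nat))); last first.
  by move=> sg _; rewrite key // prod_bool.
rewrite -(bigA_distr_bigA (fun (j : 'I_n) (b : bool) => (X d j b : nat))).
by apply: eq_bigr => j _; rewrite big_bool addnC.
Qed.

End Local.

Lemma Omega_prod Q n (s : 'S_n) m : Omega_gen Q s m =
  \sum_(d : {ffun 'I_n -> 'I_m.+1}) (\sum_(i < n) Dn d i <= m) *
      \prod_(j < n) (X Q s d j false + X Q s d j true).
Proof.
rewrite Omega_reindex card_hset.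
rewrite -(pair_big xpredT xpredT (fun d sg => (domp (d, sg) && validz s (zv (d, sg))
   && [forall j, Q (zv (d, sg) j)] : nat))) /=.
by apply: eq_bigr => d _; rewrite sum_sigma.
Qed.

Lemma sgn_neq0 b A : (sgn b A != 0%R) = (0 < A).
Proof. rewrite /sgn; case: b; lia. Qed.
Lemma sgn_gt0 b A : (0 < sgn b A)%R = ~~ b && (0 < A).
Proof. rewrite /sgn; case: b; lia. Qed.

Lemma prod_pow2 n (fp fm : nat -> bool) :
  \prod_(j < n) (~~ fm j + ~~ fp j) =
  [forall j : 'I_n, ~~ (fm j && fp j)] * 2 ^ (\sum_(j < n) (~~ fm j && ~~ fp j)).
Proof.
rewrite (eq_bigr (fun j : 'I_n => (~~ (fm j && fp j) : nat) * 2 ^ (~~ fm j && ~~ fp j))); last first.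
  by move=> j _; case: (fm j); case: (fp j).
by rewrite big_split /= prod_bool (big_morph (expn 2) (expnD 2) (expn0 2)).
Qed.

Lemma shift_sum n (P : nat -> bool) :
  \sum_(j < n) ((j.+1 < n) && P j.+1) = \sum_(j < n) ((0 < j) && P j).
Proof.
case: n => [|n]; first by rewrite !big_ord0.
rewrite big_ord_recr big_ord_recl /= ltnn andFb addn0 add0n.
by apply: eq_bigr => i _; rewrite /bump /= add1n ltnS ltn_ord.
Qed.

Section Prod.
Variables (n m : nat) (s : 'S_n) (d : {ffun 'I_n -> 'I_m.+1}).
Definition fp j := Tst s j && (Dn d j == 0).
Definition fm j := (j.+1 < n) && ~~ Tst s j.+1 && (Dn d j.+1 == 0).

Hypothesis n0 : 0 < n.

Lemma Tst0 : Tst s 0.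
Proof. rewrite /Tst /pv /=; case: insubP => [o _ _|] //; by rewrite n0. Qed.

Lemma count_free : [forall j : 'I_n, ~~ (fm j && fp j)] ->
  \sum_(j < n) (~~ fm j && ~~ fp j) = \sum_(j < n) (0 < Dn d j).
Proof.
move=> /forallP H.
have e1 : forall j : 'I_n, (~~ fm j && ~~ fp j) + fm j + fp j = 1.
  by move=> j; move: (H j); case: (fm j); case: (fp j).
have e2 : \sum_(j < n) fm j + \sum_(j < n) fp j = \sum_(j < n) (Dn d j == 0).
  rewrite /fm (eq_bigr (fun j : 'I_n => ((j.+1 < n) && (~~ Tst s j.+1 && (Dn d j.+1 == 0))) : nat));
    last by move=> j _; rewrite andbA.
  rewrite (shift_sum n (fun k => ~~ Tst s k && (Dn d k == 0))) -big_split /=; apply: eq_bigr => j _; rewrite /fp.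
  case: (posnP j) => [j0|jp] /=.
    by rewrite j0 Tst0.
  by case: (Tst s j); case: (Dn d j == 0).
have e3 : \sum_(j < n) (Dn d j == 0) + \sum_(j < n) (0 < Dn d j) = n.
  rewrite -big_split /= -[RHS](card_ord n) -sum1_card; apply: eq_bigr => j _.
  by case: (Dn d j).
have e4 : \sum_(j < n) (~~ fm j && ~~ fp j) + \sum_(j < n) fm j + \sum_(j < n) fp j = n.
  rewrite -!big_split /= -[RHS](card_ord n) -sum1_card; apply: eq_bigr => j _; exact: e1.
lia.
Qed.

Lemma Dn_le_Ad i : Dn d i <= Ad d i.
Proof. by case: i => [|i]; rewrite ?Ad0 // AdS leq_addl. Qed.

Lemma Ad0_Dn j i : Ad d j = 0 -> i <= j -> Dn d i = 0.
Proof.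
move=> Aj ij; have := Ad_mono d ij; have := Dn_le_Ad i; lia.
Qed.

Lemma Apos j : 0 < Dn d 0 -> 0 < Ad d j.
Proof. move=> h; have := Ad_mono d (leq0n j); rewrite Ad0; lia. Qed.

Lemma exists_desc (T : nat -> bool) j : T 0 -> ~~ T j -> exists k, [/\ k < j, T k & ~~ T k.+1].
Proof.
move=> T0; elim: j => [|j IH] Tj; first by rewrite T0 in Tj.
case: (boolP (T j)) => Tj'; first by exists j.
by case: (IH Tj') => k [kj Tk Tk1]; exists k; split => //; apply: ltnW.
Qed.

Lemma free_pow : [forall j : 'I_n, ~~ (fm j && fp j)] * 2 ^ (\sum_(j < n) (~~ fm j && ~~ fp j))
  = [forall j : 'I_n, ~~ (fm j && fp j)] * 2 ^ (\sum_(j < n) (0 < Dn d j)).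
Proof.
case: (boolP [forall j : 'I_n, _]) => H; last by rewrite !mul0n.
by rewrite count_free.
Qed.

Lemma prod_lazy : \prod_(j < n) (~~ fm j + ((0 < Ad d j) && ~~ fp j)) =
  [forall j : 'I_n, ~~ (fm j && fp j)] * 2 ^ (\sum_(j < n) (0 < Dn d j)).
Proof.
rewrite -free_pow -prod_pow2.
case: (boolP [forall j : 'I_n, (Ad d j == 0) ==> fp j]) => [/forallP H|].
  apply: eq_bigr => j _; move/implyP: (H j).
  case: (posnP (Ad d j)) => [Aj|Aj] //=.
  by move=> /(_ isT) ->.
rewrite negb_forall => /existsP [j]; rewrite negb_imply => /andP [/eqP Aj fpj].
have Dj : Dn d j = 0 by apply: (Ad0_Dn Aj).
have Tj : ~~ Tst s j by move: fpj; rewrite /fp Dj eqxx andbT.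
case: (exists_desc Tst0 Tj) => k [kj Tk Tk1].
case: j Aj fpj Dj Tj kj => [[|j'] jn] /= Aj fpj Dj Tj kj.
  by rewrite Tst0 in Tj.
have j'n : j' < n by lia.
have kn : k < n by lia.
have fmj : fm j' = true by rewrite /fm jn Tj Dj.
have Aj' : Ad d j' = 0 by have := Ad_mono d (leqnSn j'); lia.
have fmk : fm k = true.
  rewrite /fm Tk1 (Ad0_Dn Aj) //; lia.
have fpk : fp k = true by rewrite /fp Tk (Ad0_Dn Aj) //; lia.
rewrite [LHS](bigD1 (Ordinal j'n)) //= fmj Aj' [RHS](bigD1 (Ordinal kn)) //= fmk fpk.
by rewrite !mul0n.
Qed.

Lemma prod_std : \prod_(j < n) ((0 < Ad d j) * (~~ fm j + ~~ fp j)) =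
  (0 < Dn d 0) * ([forall j : 'I_n, ~~ (fm j && fp j)] * 2 ^ (\sum_(j < n) (0 < Dn d j))).
Proof.
case: (posnP (Dn d 0)) => [D0|D0].
  rewrite mul0n (bigD1 (Ordinal n0)) //= Ad0 D0 //.
change (nat_of_bool true) with 1; rewrite mul1n -free_pow -prod_pow2; apply: eq_bigr => j _.
by rewrite (Apos j D0) mul1n.
Qed.

Lemma prod_strict : \prod_(j < n) ((0 < Ad d j) && ~~ fm j) =
  (0 < Dn d 0) * [forall j : 'I_n, ~~ fm j].
Proof.
case: (posnP (Dn d 0)) => [D0|D0].
  rewrite mul0n (bigD1 (Ordinal n0)) //= Ad0 D0 //.
change (nat_of_bool true) with 1; rewrite mul1n -prod_bool; apply: eq_bigr => j _.
by rewrite (Apos j D0).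
Qed.

End Prod.

Definition hitall (D : nat -> nat) (B : seq (seq nat)) :=
  all (fun b => has (fun x => 0 < D x) b) B.

Definition G n m (w : nat -> nat) (B : seq (seq nat)) : nat :=
  \sum_(d : {ffun 'I_n -> 'I_m.+1})
     ((\sum_(i < n) Dn d i <= m) * (w (\sum_(j < n) (0 < Dn d j)) * hitall (Dn d) B)).

Definition peakp n (s : 'S_n) i := (pv s i.-1 < pv s i) && (pv s i.+1 < pv s i).
Definition desp n (s : 'S_n) i := pv s i.+1 < pv s i.

Definition BL n (s : 'S_n) := [seq [:: i.-1; i] | i <- [seq i <- iota 1 n.-1 | peakp s i]].
Definition BS n (s : 'S_n) := [:: 0] :: [seq [:: i.-1; i] | i <- [seq i <- iota 2 (n - 2) | peakp s i]].
Definition BP n (s : 'S_n) := [:: 0] :: [seq [:: i] | i <- [seq i <- iota 1 n.-1 | desp s i]].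

Lemma hit2 (p : nat -> bool) (D : nat -> nat) a k :
  hitall D [seq [:: i.-1; i] | i <- [seq i <- iota a k | p i]]
  = all (fun i => p i ==> (0 < D i.-1) || (0 < D i)) (iota a k).
Proof. by rewrite /hitall all_map all_filter; apply: eq_all => i /=; rewrite orbF. Qed.

Lemma hit1 (p : nat -> bool) (D : nat -> nat) a k :
  hitall D [seq [:: i] | i <- [seq i <- iota a k | p i]]
  = all (fun i => p i ==> (0 < D i)) (iota a k).
Proof. by rewrite /hitall all_map all_filter; apply: eq_all => i /=; rewrite orbF. Qed.

Section Conv.
Variables (n : nat) (s : 'S_n).

Lemma pv_lt i (h : i < n) : pv s i.+1 = (s (Ordinal h)).+1.
Proof. exact: (pv_ord s (Ordinal h)). Qed.

Lemma desp_T i : 0 < i < n -> desp s i = ~~ Tst s i.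
Proof.
case: i => [|j] // /andP [_ lt]; rewrite /desp /Tst.
have h1 : j < n by lia.
rewrite (pv_lt h1) (pv_lt lt).
have ne : s (Ordinal h1) != s (Ordinal lt).
  rewrite (inj_eq perm_inj); apply/eqP => /(congr1 val) /=; lia.
move: ne; rewrite !ltnS -(inj_eq val_inj) /=; case: ltngtP => //.
Qed.

Lemma peakp_T i : 0 < i < n -> peakp s i = Tst s i.-1 && ~~ Tst s i.
Proof.
move=> h; rewrite /peakp -(desp_T h) /desp /Tst.
by have -> : i.-1.+1 = i by lia.
Qed.

End Conv.

Section Forms.
Variables (n m : nat) (s : 'S_n).
Hypothesis n0 : 0 < n.

Lemma cond_L (d : {ffun 'I_n -> 'I_m.+1}) :
  [forall j : 'I_n, ~~ (fm s d j && fp s d j)] = hitall (Dn d) (BL s).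
Proof.
rewrite /BL hit2; apply/forallP/allP => H.
  move=> i; rewrite mem_iota => ir; apply/implyP.
  have i0 : 0 < i < n by lia.
  have jn : i.-1 < n by lia.
  rewrite peakp_T // => /andP [T1 T2].
  move: (H (Ordinal jn)); rewrite /fm /fp /=.
  have -> : i.-1.+1 = i by lia.
  rewrite T1 T2 (_ : i < n) //=; last by lia.
  by rewrite !eqn0Ngt; case: (0 < Dn d i.-1); case: (0 < Dn d i).
move=> j; rewrite /fm /fp.
case: (ltnP j.+1 n) => jn //=.
have := H j.+1; rewrite mem_iota (_ : 1 <= j.+1 < 1 + n.-1); last by lia.
rewrite peakp_T /=; last by lia.
move/(_ isT); rewrite !eqn0Ngt.
by move: (Tst s j) (Tst s j.+1) (0 < Dn d j) (0 < Dn d j.+1); do 4! case.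
Qed.

Lemma Omega_L : Omega s m = G n m (expn 2) (BL s).
Proof.
rewrite /Omega Omega_prod /G; apply: eq_bigr => d _; congr (_ * _).
rewrite (eq_bigr (fun j : 'I_n => ~~ fm s d j + ((0 < Ad d j) && ~~ fp s d j))); last first.
  move=> j _; rewrite /X /fm /fp /=.
  by case: (Tst s j && (Dn d j == 0)); case: ((j.+1 < n) && ~~ Tst s j.+1 && (Dn d j.+1 == 0));
     case: (0 < Ad d j).
by rewrite prod_lazy // mulnC cond_L.
Qed.

Lemma hit_cons D b B : hitall D (b :: B) = has (fun x => 0 < D x) b && hitall D B.
Proof. by []. Qed.

Lemma cond_S (d : {ffun 'I_n -> 'I_m.+1}) :
  (0 < Dn d 0) * [forall j : 'I_n, ~~ (fm s d j && fp s d j)] = hitall (Dn d) (BS s).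
Proof.
rewrite /BS hit_cons /= orbF.
case: (posnP (Dn d 0)) => [D0|D0] //=.
rewrite mul1n hit2; congr nat_of_bool; apply/forallP/allP => H.
  move=> i; rewrite mem_iota => ir; apply/implyP.
  have i0 : 0 < i < n by lia.
  have jn : i.-1 < n by lia.
  rewrite peakp_T // => /andP [T1 T2].
  move: (H (Ordinal jn)); rewrite /fm /fp /=.
  have -> : i.-1.+1 = i by lia.
  rewrite T1 T2 (_ : i < n) //=; last by lia.
  by rewrite !eqn0Ngt; case: (0 < Dn d i.-1); case: (0 < Dn d i).
move=> j; rewrite /fm /fp.
case: (posnP (nat_of_ord j)) => [->|jp]; first by rewrite !eqn0Ngt D0 /= !andbF.
case: (ltnP j.+1 n) => jn //=.
have := H j.+1; rewrite mem_iota (_ : 2 <= j.+1 < 2 + (n - 2)); last by lia.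
rewrite peakp_T /=; last by lia.
move/(_ isT); rewrite !eqn0Ngt.
by move: (Tst s j) (Tst s j.+1) (0 < Dn d j) (0 < Dn d j.+1); do 4! case.
Qed.

Lemma cond_P (d : {ffun 'I_n -> 'I_m.+1}) :
  (0 < Dn d 0) * [forall j : 'I_n, ~~ fm s d j] = hitall (Dn d) (BP s).
Proof.
rewrite /BP hit_cons /= orbF.
case: (posnP (Dn d 0)) => [D0|D0] //=.
rewrite mul1n hit1; congr nat_of_bool; apply/forallP/allP => H.
  move=> i; rewrite mem_iota => ir; apply/implyP.
  have i0 : 0 < i < n by lia.
  have jn : i.-1 < n by lia.
  rewrite desp_T // => T2.
  move: (H (Ordinal jn)); rewrite /fm /=.
  have -> : i.-1.+1 = i by lia.
  rewrite T2 (_ : i < n) //=; last by lia.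
  by rewrite !eqn0Ngt; case: (0 < Dn d i).
move=> j; rewrite /fm.
case: (ltnP j.+1 n) => jn //=.
have := H j.+1; rewrite mem_iota (_ : 1 <= j.+1 < 1 + n.-1); last by lia.
rewrite desp_T /=; last by lia.
move/(_ isT); rewrite !eqn0Ngt.
by move: (Tst s j.+1) (0 < Dn d j.+1); do 2! case.
Qed.

Lemma Omega_S : Omega_star s m = G n m (expn 2) (BS s).
Proof.
rewrite /Omega_star Omega_prod /G; apply: eq_bigr => d _; congr (_ * _).
rewrite (eq_bigr (fun j : 'I_n => (0 < Ad d j) * (~~ fm s d j + ~~ fp s d j))); last first.
  move=> j _; rewrite /X /fm /fp /=.
  have -> : (Ad d j != 0 :> int)%R = (0 < Ad d j) by lia.
  have -> : ((- (Ad d j)%:Z)%R != 0%Z) = (0 < Ad d j) by lia.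
  by case: (Tst s j && (Dn d j == 0)); case: ((j.+1 < n) && ~~ Tst s j.+1 && (Dn d j.+1 == 0));
     case: (0 < Ad d j).
by rewrite prod_std // -cond_S mulnA mulnC.
Qed.

Lemma Omega_P : Omega_plus s m = G n m (fun _ => 1) (BP s).
Proof.
rewrite /Omega_plus Omega_prod /G; apply: eq_bigr => d _; congr (_ * _).
rewrite (eq_bigr (fun j : 'I_n => ((0 < Ad d j) && ~~ fm s d j) : nat)); last first.
  move=> j _; rewrite /X /fm /fp /=.
  have -> : (0 < (Ad d j)%:Z)%R = (0 < Ad d j) by lia.
  have -> : (0 < - (Ad d j)%:Z)%R = false by lia.
  by case: (Tst s j && (Dn d j == 0)); case: ((j.+1 < n) && ~~ Tst s j.+1 && (Dn d j.+1 == 0));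
     case: (0 < Ad d j).
by rewrite prod_strict // cond_P mul1n.
Qed.

End Forms.

Lemma nth_flatten_pos (ss : seq (seq nat)) l c : l < size ss -> c < size (nth [::] ss l) ->
  nth 0 (flatten ss) (sumn (map size (take l ss)) + c) = nth 0 (nth [::] ss l) c /\
  sumn (map size (take l ss)) + c < size (flatten ss).
Proof.
elim: ss l => [|s0 ss IH] [|l] //= lt cs.
  by rewrite add0n nth_cat cs size_cat; split => //; apply: leq_trans (leq_addr _ _).
have [e1 e2] := IH l lt cs.
rewrite -addnA nth_cat ltnNge leq_addr /= addKn e1 size_cat; split => //.
by rewrite ltn_add2l.
Qed.

Section Lf.
Variables (n : nat) (F : seq nat).
Definition Lfull := F ++ [seq x <- iota 0 n | x \notin F].
Hypotheses (uF : uniq F) (aF : all (fun x => x < n) F).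

Lemma Lfull_uniq : uniq Lfull.
Proof.
rewrite cat_uniq uF filter_uniq ?iota_uniq // andbT /=.
by apply/hasPn => x; rewrite mem_filter => /andP [].
Qed.

Lemma mem_Lfull x : (x \in Lfull) = (x < n).
Proof.
rewrite mem_cat mem_filter mem_iota add0n leq0n /=.
case: (boolP (x \in F)) => //= xF; by rewrite (allP aF x xF).
Qed.

Lemma size_Lfull : size Lfull = n.
Proof.
have := @uniq_perm _ Lfull (iota 0 n) Lfull_uniq (iota_uniq 0 n).
move=> /(_ _)/perm_size; rewrite size_iota; apply => x.
by rewrite mem_Lfull mem_iota.
Qed.

Lemma nth_Lfull r : r < size F -> nth 0 Lfull r = nth 0 F r.
Proof. by move=> h; rewrite nth_cat h. Qed.
End Lf.

Lemma leq_bool (a b : bool) : (a -> b) -> (a : nat) <= b.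
Proof. by case: a; case: b => // /(_ isT). Qed.

Lemma G_mono n m w (B B' : seq (seq nat)) :
  uniq (flatten B) -> uniq (flatten B') ->
  all (fun x => x < n) (flatten B) -> all (fun x => x < n) (flatten B') ->
  size B <= size B' -> take (size B) (map size B') = map size B ->
  G n m w B' <= G n m w B.
Proof.
move=> uF uF' aF aF' sB shB.
set F := flatten B; set F' := flatten B'.
set L := Lfull n F; set L' := Lfull n F'.
pose phi x := nth 0 L (index x L').
have sL : size L = n by apply: size_Lfull.
have sL' : size L' = n by apply: size_Lfull.
have phin : forall x, x < n -> phi x < n.
  move=> x xn; rewrite -(mem_Lfull aF); apply: mem_nth.
  by rewrite sL -sL' index_mem (mem_Lfull aF').
pose po (i : 'I_n) : 'I_n := Ordinal (phin i (ltn_ord i)).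
have poinj : injective po.
  move=> i j /(congr1 val) /= /eqP.
  have ii : index (i : nat) L' < size L.
    by rewrite sL; have := ltn_ord i; rewrite -(mem_Lfull aF') -index_mem sL'.
  have ij : index (j : nat) L' < size L.
    by rewrite sL; have := ltn_ord j; rewrite -(mem_Lfull aF') -index_mem sL'.
  rewrite /phi nth_uniq ?Lfull_uniq // => /eqP e.
  apply: val_inj => /=.
  rewrite -(nth_index 0 (_ : (i : nat) \in L')) ?(mem_Lfull aF') // e.
  by rewrite nth_index // (mem_Lfull aF').
pose p := perm poinj.
pose tr (d : {ffun 'I_n -> 'I_m.+1}) := [ffun i => d (p i)].
have trinj : injective tr.
  move=> d1 d2 /ffunP e; apply/ffunP => x; move: (e (p^-1 x)%g).
  by rewrite !ffunE permKV.
rewrite /G (reindex_inj trinj); apply: leq_sum => d _.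
have Dtr : forall k, k < n -> Dn (tr d) k = Dn d (phi k).
  move=> k kn; rewrite -[k]/(nat_of_ord (Ordinal kn)) Dn_ord ffunE /p permE.
  by rewrite -[phi k]/(nat_of_ord (po (Ordinal kn))) Dn_ord.
have e1 : \sum_(i < n) Dn (tr d) i = \sum_(i < n) Dn d i.
  rewrite [RHS](reindex_inj (perm_inj (s := p))) /=; apply: eq_bigr => i _.
  by rewrite !Dn_ord ffunE.
have e2 : \sum_(i < n) (0 < Dn (tr d) i) = \sum_(i < n) (0 < Dn d i).
  rewrite [RHS](reindex_inj (perm_inj (s := p))) /=; apply: eq_bigr => i _.
  by rewrite !Dn_ord ffunE.
rewrite e1 e2; apply: leq_mul => //; apply: leq_mul => //; apply: leq_bool.
move=> /allP H; apply/allP => b bB.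
set l := index b B.
have lB : l < size B by rewrite index_mem.
have lB' : l < size B' by apply: leq_trans sB.
have eb : nth [::] B l = b by rewrite nth_index.
set b' := nth [::] B' l.
have b'B' : b' \in B' by apply: mem_nth.
have ssz : size b' = size b.
  rewrite -eb /b' -!(nth_map [::] 0 size) // -shB nth_take //.
have ssum : sumn (map size (take l B')) = sumn (map size (take l B)).
  by rewrite !map_take -shB take_takel // ltnW.
case/hasP: (H b' b'B') => x xb' Dx.
have xF' : x \in F' by apply/flattenP; exists b'.
have xn : x < n by apply: (allP aF').
set c := index x b'.
have cb : c < size b' by rewrite index_mem.
have [nF' rF'] := nth_flatten_pos lB' cb.
have cb2 : c < size (nth [::] B l) by rewrite eb -ssz.
have [nF rF] := nth_flatten_pos lB cb2.
rewrite eb in nF.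
apply/hasP; exists (phi x); last by rewrite -Dtr.
have ix : index x L' = sumn (map size (take l B)) + c.
  rewrite -ssum -[x in index x _](nth_index 0 xb') -/c -nF'.
  rewrite /L' -(nth_Lfull n rF') index_uniq ?Lfull_uniq //.
  by rewrite (size_Lfull uF' aF') -(size_Lfull uF' aF') /Lfull size_cat;
     apply: leq_trans rF' (leq_addr _ _).
rewrite /phi ix /L (nth_Lfull n rF) nF -eb.
by apply: mem_nth; rewrite eb -ssz.
Qed.

Definition R2 (x y : nat) := x.+1 < y.
Lemma R2trans : transitive R2.
Proof. rewrite /R2 => y x z; lia. Qed.

Lemma nocons_sorted (p : pred nat) a c : (forall x, p x -> ~~ p x.+1) ->
  sorted R2 [seq i <- iota a c | p i].
Proof.
move=> H; elim: c a => [|c IH] a //=.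
case: ifP => pa //=; rewrite (path_sortedE R2trans) IH andbT.
apply/allP => y; rewrite mem_filter mem_iota => /andP [py yr].
rewrite /R2; case: (ltngtP a.+1 y) => // e; first by lia.
by move: (H a pa); rewrite e py.
Qed.

Definition pr (i : nat) := [:: i.-1; i].

Lemma pair_path x P : path R2 x P -> all (fun y => 0 < y) P -> path ltn x (flatten (map pr P)).
Proof.
elim: P x => [|y P IH] x //= /andP [Rxy pP] /andP [y0 aP].
rewrite /R2 in Rxy; apply/and3P; split; try lia.
exact: IH.
Qed.

Lemma pair_sorted P : sorted R2 P -> all (fun y => 0 < y) P -> sorted ltn (flatten (map pr P)).
Proof.
case: P => [|y P] //= pP /andP [y0 aP].
apply/andP; split; first lia.
exact: pair_path.
Qed.

Lemma ltn_uniq s : sorted ltn s -> uniq s.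
Proof. apply: sorted_uniq; [exact: ltn_trans | exact: ltnn]. Qed.

Lemma shape_take (H : seq (seq nat)) f k (P P' : seq nat) :
  (forall i, size (f i) = k) -> size P <= size P' ->
  take (size (H ++ map f P)) (map size (H ++ map f P')) = map size (H ++ map f P).
Proof.
move=> sf sP.
have ms : forall Q, map size (map f Q) = nseq (size Q) k.
  by elim => [|q Q IH] //=; rewrite sf IH.
rewrite !map_cat !ms take_cat size_cat !size_map ltnNge leq_addr /= addKn.
by rewrite take_nseq.
Qed.

Lemma peak_nocons n (s : 'S_n) x : peakp s x -> ~~ peakp s x.+1.
Proof. rewrite /peakp /= => /andP [_ h]; apply/negP => /andP [h' _]; lia. Qed.

Section Kinds.
Variables (n m : nat).
Hypothesis n0 : 0 < n.

Lemma BL_props (s : 'S_n) :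
  [/\ uniq (flatten (BL s)), all (fun x => x < n) (flatten (BL s)) & size (BL s) = lpk s].
Proof.
split.
- apply: ltn_uniq; apply: pair_sorted; first exact/nocons_sorted/peak_nocons.
  by apply/allP => y; rewrite mem_filter mem_iota => /andP [_ /andP []].
- apply/allP => x /flattenP [b]; move/mapP => [i]; rewrite mem_filter mem_iota => /andP [_ ir] -> /=.
  rewrite !inE => /orP [] /eqP ->; lia.
- by rewrite size_map size_filter.
Qed.

Lemma BS_props (s : 'S_n) :
  [/\ uniq (flatten (BS s)), all (fun x => x < n) (flatten (BS s)) & size (BS s) = (pk s).+1].
Proof.
split.
- apply: ltn_uniq => /=; apply: pair_path.
    rewrite (path_sortedE R2trans) nocons_sorted ?andbT; last exact: peak_nocons.
    by apply/allP => y; rewrite mem_filter mem_iota /R2 => /andP [_ /andP []].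
  by apply/allP => y; rewrite mem_filter mem_iota => /andP [_ /andP []]; lia.
- apply/allP => x /flattenP [b]; rewrite inE => /orP [/eqP -> |].
    by rewrite inE => /eqP ->.
  move/mapP => [i]; rewrite mem_filter mem_iota => /andP [_ ir] -> /=.
  rewrite !inE => /orP [] /eqP ->; lia.
- by rewrite /= size_map size_filter.
Qed.

Lemma BP_props (s : 'S_n) :
  [/\ uniq (flatten (BP s)), all (fun x => x < n) (flatten (BP s)) & size (BP s) = (des s).+1].
Proof.
have fl : forall Q : seq nat, flatten [seq [:: i] | i <- Q] = Q by elim => //= q Q ->.
have eF : flatten (BP s) = 0 :: [seq i <- iota 1 n.-1 | desp s i] by rewrite /BP /= fl.
split.
- rewrite eF; apply: ltn_uniq => /=.
  rewrite (path_sortedE ltn_trans) sorted_filter ?iota_ltn_sorted ?andbT //; last exact: ltn_trans.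
  by apply/allP => y; rewrite mem_filter mem_iota => /andP [_ /andP []].
- rewrite eF; apply/allP => x; rewrite inE => /orP [/eqP -> //|].
  rewrite mem_filter mem_iota => /andP [_ ir]; lia.
- by rewrite /= size_map size_filter.
Qed.

Lemma mono_L (s s' : 'S_n) : lpk s <= lpk s' -> Omega s' m <= Omega s m.
Proof.
move=> le; rewrite !Omega_L //.
have [u a sz] := BL_props s; have [u' a' sz'] := BL_props s'.
apply: G_mono => //; first by rewrite sz sz'.
have := @shape_take [::] pr 2 _ _ (fun i => erefl)
  (_ : size [seq i <- iota 1 n.-1 | peakp s i] <= size [seq i <- iota 1 n.-1 | peakp s' i]).
by apply; move: le sz sz'; rewrite /BL !size_map => ? -> ->.
Qed.

Lemma mono_S (s s' : 'S_n) : pk s <= pk s' -> Omega_star s' m <= Omega_star s m.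
Proof.
move=> le; rewrite !Omega_S //.
have [u a sz] := BS_props s; have [u' a' sz'] := BS_props s'.
apply: G_mono => //; first by rewrite sz sz'.
have := @shape_take [:: [:: 0]] pr 2 _ _ (fun i => erefl)
  (_ : size [seq i <- iota 2 (n - 2) | peakp s i] <= size [seq i <- iota 2 (n - 2) | peakp s' i]).
by apply; move: le sz sz'; rewrite /BS /= !size_map => ? [->] [->].
Qed.

Lemma mono_P (s s' : 'S_n) : des s <= des s' -> Omega_plus s' m <= Omega_plus s m.
Proof.
move=> le; rewrite !Omega_P //.
have [u a sz] := BP_props s; have [u' a' sz'] := BP_props s'.
apply: G_mono => //; first by rewrite sz sz'.
have := @shape_take [:: [:: 0]] (fun i => [:: i]) 1 _ _ (fun i => erefl)
  (_ : size [seq i <- iota 1 n.-1 | desp s i] <= size [seq i <- iota 1 n.-1 | desp s' i]).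
by apply; move: le sz sz'; rewrite /BP /= !size_map => ? [->] [->].
Qed.

Lemma flat_size (B : seq (seq nat)) : uniq (flatten B) -> all (fun x => x < n) (flatten B) ->
  size (flatten B) <= n.
Proof.
move=> u a; rewrite -(size_iota 0 n); apply: uniq_leq_size => // x xB.
by rewrite mem_iota /=; apply: (allP a).
Qed.

Lemma bound_L (s : 'S_n) : lpk s <= n./2.
Proof.
have [u a sz] := BL_props s; have := flat_size u a.
rewrite size_flatten /shape /BL -map_comp /= -sz /BL size_map.
have -> : forall Q : seq nat, sumn [seq (size \o pr) i | i <- Q] = (size Q).*2.
  by elim => //= q Q ->; rewrite doubleS.
by rewrite geq_half_double.
Qed.

Lemma bound_S (s : 'S_n) : pk s <= n.-1./2.
Proof.
have [u a sz] := BS_props s; have := flat_size u a.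
rewrite size_flatten /shape /BS /= -map_comp.
have -> : forall Q : seq nat, sumn [seq (size \o pr) i | i <- Q] = (size Q).*2.
  by elim => //= q Q ->; rewrite doubleS.
move: sz; rewrite /BS /= size_map => [[->]].
rewrite geq_half_double; lia.
Qed.

Lemma bound_P (s : 'S_n) : des s <= n.-1.
Proof.
by rewrite /des (leq_trans (count_size _ _)) // size_iota.
Qed.

End Kinds.

Unset Implicit Arguments.
Local Open Scope ring_scope.

Lemma bigmax_eq n (f : 'S_n -> rat) (M : rat) :
  (forall s, f s <= M) -> (exists s, f s = M) ->
  \big[Num.max/f 1%g]_(s : 'S_n) f s = M.
Proof.
move=> le [s0 e]; apply/le_anti/andP; split.
  apply: (big_ind (fun x => x <= M)) => //.
  by move=> x y hx hy; rewrite ge_max hx hy.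
by rewrite (bigD1 s0) //= le_max e lexx.
Qed.

Lemma Omega_bounds (n m : nat) (k : shelf) (s0 s1 s : 'S_n) : (0 < n)%N ->
  shelf_stat k s0 = 0%N -> shelf_stat k s1 = kmax k n ->
  shuffle_dist k m s1 <= shuffle_dist k m s <= shuffle_dist k m s0.
Proof.
move=> n0; case: k => /= h0 h1; apply/andP; split; apply: ler_wpM2r;
  rewrite ?invr_ge0 ?ler0n // ler_nat.
- by apply: mono_L => //; rewrite h1 bound_L.
- by apply: mono_L => //; rewrite h0.
- by apply: mono_S => //; rewrite h1 bound_S.
- by apply: mono_S => //; rewrite h0.
- by apply: mono_P => //; rewrite h1 bound_P.
- by apply: mono_P => //; rewrite h0.
Qed.

Theorem mainTheorem7 (n m : nat) (k : shelf) (s0 s1 : 'S_n) :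
  (0 < n)%N -> (0 < m)%N ->
  shelf_stat k s0 = 0%N -> shelf_stat k s1 = kmax k n ->
  sep (shuffle_dist k m (n:=n)) =
    Num.max (1 - (n`!)%:R * shuffle_dist k m s0)
            (1 - (n`!)%:R * shuffle_dist k m s1)
  /\
  dist_inf (shuffle_dist k m (n:=n)) =
    Num.max `|1 - (n`!)%:R * shuffle_dist k m s0|
            `|1 - (n`!)%:R * shuffle_dist k m s1|.
Proof.
move=> n0 m0 h0 h1.
set x := fun s : 'S_n => 1 - (n`!)%:R * shuffle_dist k m s.
have hx : forall s, x s0 <= x s <= x s1.
  move=> s; have /andP [a b] := @Omega_bounds n m k s0 s1 s n0 h0 h1.
  by rewrite /x !lerB // ler_wpM2l ?ler0n.
have h01 : x s0 <= x s1 by have /andP [a b] := hx s0; apply: le_trans b.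
split.
  rewrite /sep -/(x _) (max_idPr h01).
  apply: (@bigmax_eq n x); last by exists s1.
  by move=> s; have /andP [] := hx s.
rewrite /dist_inf.
apply: (@bigmax_eq n (fun s => `|x s|)).
  move=> s; have /andP [a b] := hx s.
  rewrite ler_norml; apply/andP; split.
    apply: le_trans a; rewrite lerNl.
    apply: (@le_trans _ _ `|x s0|); first by rewrite -normrN ler_norm.
    by rewrite le_max lexx.
  apply: le_trans b _; apply: (@le_trans _ _ `|x s1|); first exact: ler_norm.
  by rewrite le_max lexx orbT.
case: (leP `|x s0| `|x s1|) => h.
  by exists s1.
by exists s0.
Qed.
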